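(* Let $T$ be a linear operator in $H$ and $V\subset\operatorname{dom}(T)$ a finite-dimensional subspace. Then for given $\lambda\in W_{e1}(T)$ and $\varepsilon>0$ there exist $x\in V^\perp\cap\operatorname{dom}(T)$ with $\|x\|=1$ and $\mu\in\mathbb C$ with $|\mu-\lambda|<\varepsilon$ such that \[ T_{V_x}=\begin{pmatrix}T_V&A\\0&\mu I\end{pmatrix}\quad\text{in } V_x:=V\oplus\operatorname{span}\{x\} \] for some linear operator $A:\operatorname{span}\{x\}\to V$; consequently $\sigma(T_{V_x})=\sigma(T_V)\cup\{\mu\}$. Moreover, one can choose $A=0$ if $\overline{\operatorname{dom}(T)}=H$ and $\operatorname{dom}(T)\subset\operatorname{dom}(T^* )$, and one can choose $\mu=\lambda$ if $\lambda\in\operatorname{int}W_{e1}(T)$.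
   Context: $H$ is a separable infinite-dimensional complex Hilbert space. $W(S)=\{\langle Sx,x\rangle:x\in\operatorname{dom}(S),\|x\|=1\}$. $W_{e1}(T):=\bigcap_{U}\overline{W(T|_{U^\perp\cap\operatorname{dom}(T)})}$, the intersection over all finite-dimensional subspaces $U\subset H$, where $T|_M$ denotes restriction to $M$. For a closed subspace $W\subset\operatorname{dom}(T)$, $P_W$ is the orthogonal projection onto $W$ and $T_W:=P_WT|_W$ is the compression of $T$ to $W$. *)

(* Defs.v *)
From HB Require Import structures.
From mathcomp Require Import all_boot all_order all_algebra.
From mathcomp Require Import all_classical all_reals all_analysis.
From mathcomp Require Import complex.
Import Order.TTheory GRing.Theory Num.Theory.
Import numFieldTopology.Exports numFieldNormedType.Exports.

Set Implicit Arguments.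
Unset Strict Implicit.
Unset Printing Implicit Defensive.

Local Open Scope ring_scope.
Local Open Scope classical_set_scope.

Section Hilbert.
Variables (R : realType) (H : lmodType (complex R)).
Variable ip : H -> H -> complex R.   (* inner product, linear in 1st argument *)

Definition hnorm (x : H) : complex R := sqrtC (ip x x).

Definition fspan (s : seq H) : set H :=
  [set y | exists c : 'I_(size s) -> complex R,
           y = \sum_(i < size s) c i *: nth 0 s i].

Record sep_inf_Hilbert : Prop := {
  ipDl : forall (a : complex R) (x y z : H),
           ip (a *: x + y) z = a * ip x z + ip y z;
  ip_conj : forall x y : H, ip y x = (ip x y)^*;
  ip_ge0 : forall x : H, 0 <= ip x x;
  ip_eq0 : forall x : H, ip x x = 0 -> x = 0;
  ip_complete : forall u : nat -> H,
     (forall e : complex R, 0 < e -> exists N : nat, forall m n : nat,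
         (N <= m)%N -> (N <= n)%N -> hnorm (u m - u n) < e) ->
     exists l : H, forall e : complex R, 0 < e ->
         exists N : nat, forall n : nat, (N <= n)%N -> hnorm (u n - l) < e;
  ip_separable : exists d : nat -> H, forall (y : H) (e : complex R), 0 < e ->
     exists n : nat, hnorm (y - d n) < e;
  ip_infdim : forall s : seq H, exists y : H, ~ fspan s y
}.

Definition linop (dom : set H) (T : H -> H) : Prop :=
  dom 0 /\ forall (a : complex R) (x y : H), dom x -> dom y ->
    dom (a *: x + y) /\ T (a *: x + y) = a *: T x + T y.

Definition findim_subspace (V : set H) : Prop := exists s : seq H, V = fspan s.

Definition orth (V : set H) : set H := [set y | forall v, V v -> ip y v = 0].

Definition numrange (D : set H) (T : H -> H) : set (complex R) :=
  [set ip (T x) x | x in [set x | D x /\ hnorm x = 1]].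

Definition We1 (dom : set H) (T : H -> H) : set (complex R) :=
  \bigcap_(U in findim_subspace)
     closure (numrange (orth U `&` dom) T : set (complex R)^o).

(* orthogonal projection onto W (W closed subspace: here finite-dimensional) *)
Definition proj (W : set H) (y : H) : H :=
  xget 0 [set w | W w /\ forall u, W u -> ip (y - w) u = 0].

Definition compress (W : set H) (T : H -> H) : H -> H := fun w => proj W (T w).

Definition spectrum (W : set H) (S : H -> H) : set (complex R) :=
  [set z | ~ (forall y, W y -> exists! w, W w /\ S w - z *: w = y)].

Definition addline (V : set H) (x : H) : set H :=
  [set y | exists v (c : complex R), V v /\ y = v + c *: x].

(* T_{V_x} = [[T_V, A],[0, mu I]] w.r.t. V_x = V (+) span{x},
   with A : span{x} -> V linear *)
Definition block_form (V : set H) (x : H) (T : H -> H) (mu : complex R)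
    (A : H -> H) : Prop :=
  (forall c : complex R, A (c *: x) = c *: A x) /\ V (A x) /\
  forall (v : H) (c : complex R), V v ->
    compress (addline V x) T (v + c *: x)
      = compress V T v + A (c *: x) + (c * mu) *: x.

Definition dense_dom (dom : set H) : Prop :=
  forall (y : H) (e : complex R), 0 < e -> exists x, dom x /\ hnorm (y - x) < e.

Definition adj_dom (dom : set H) (T : H -> H) : set H :=
  [set y | exists z, forall x, dom x -> ip (T x) y = ip x z].

Definition lemma6p6_choice (dom : set H) (T : H -> H) (V : set H)
    (lam eps : complex R) (x : H) (mu : complex R) (A : H -> H) : Prop :=
  [/\ orth V x /\ dom x, hnorm x = 1, `|mu - lam| < eps,
      block_form V x T mu A &
      spectrum (addline V x) (compress (addline V x) T)
        = spectrum V (compress V T) `|` [set mu]].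

End Hilbert.

(* Main.v *)
Require Import Defs.
From HB Require Import structures.
From mathcomp Require Import all_boot all_order all_algebra.
From mathcomp Require Import all_classical all_reals all_analysis.
From mathcomp Require Import complex.
From mathcomp Require Import ring lra zify.
Import Order.TTheory GRing.Theory Num.Theory.
Import numFieldTopology.Exports numFieldNormedType.Exports.
Local Open Scope ring_scope.
Local Open Scope classical_set_scope.
Set Implicit Arguments.
Unset Strict Implicit.
Section CX.
Variable R : realType.
Implicit Types (b g k m t : complex R).

Lemma omega_choice b g : exists w k, w != 0 /\ k^* = k /\ w * b + w^* * g = k.
Proof.
have [h|h] := eqVneq (b - g^*) 0.
  have eb : b = g^* by apply/eqP; rewrite -subr_eq0 h.
  exists 1, (g^* + g); split; first exact: oner_neq0.
  split; first by rewrite rmorphD /= conjCK addrC.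
  by rewrite conjC1 !mul1r eb.
exists (b^* - g), (b * b^* - g * g^*); split.
  apply: contra h => /eqP h0; have := congr1 Num.conj h0.
  by rewrite rmorphB /= conjCK conjC0 => ->.
split; first by rewrite rmorphB !rmorphM /= !conjCK mulrC [g^* * g]mulrC.
by rewrite rmorphB /= conjCK; ring.
Qed.

Lemma quad_root k m (tr : R) : k^* = k -> m^* = m -> 0 <= m -> m != 0 ->
  0 < tr < 1 ->
  exists s : complex R, s^* = s /\
    (1 - (tr%:C)%C) + k * s - (tr%:C)%C * m * (s * s) = 0.
Proof.
move=> kr mr m0 mn0 /andP [t0 t1].
set t := (tr%:C)%C.
have t0' : 0 <= t by rewrite /t ler0c ltW.
have tn0 : t != 0 by rewrite /t eq_complex /= negb_and (gt_eqF t0).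
have t1' : 0 <= 1 - t.
  by rewrite /t -[1]/((1%:C)%C) -rmorphB ler0c subr_ge0 ltW.
have kk : 0 <= k * k by rewrite -{2}kr -normCK exprn_ge0.
set D := k * k + 4 * t * m * (1 - t).
have D0 : 0 <= D.
  by apply: addr_ge0 => //; apply: mulr_ge0 => //; apply: mulr_ge0 => //; apply: mulr_ge0 => //; apply: ler0n.
set r := sqrtC D.
have rr : r \is Num.real by apply: ger0_real; rewrite sqrtC_ge0.
have krr : k \is Num.real by rewrite CrealE kr.
have mrr : m \is Num.real by rewrite CrealE mr.
have trr : t \is Num.real by apply: ger0_real.
exists ((k + r) / (2 * t * m)); split.
  apply/eqP; rewrite -CrealE.
  by rewrite rpredM ?rpredD ?rpredV ?rpredM ?rpred_nat.
have n2 : (2 : complex R) != 0 by rewrite pnatr_eq0.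
have n4 : (4 : complex R) != 0 by rewrite pnatr_eq0.
have -> : (1 - t) + k * ((k + r) / (2 * t * m)) - t * m * ((k + r) / (2 * t * m) * ((k + r) / (2 * t * m)))
   = (D - r ^+ 2) / (4 * t * m).
  by rewrite /D; field; rewrite ?n2 ?n4 ?tn0 ?mn0.
by rewrite /r sqrtCK subrr mul0r.
Qed.

Lemma normc_lt (a b e : R) : `|Complex a b| < (e%:C)%C -> `|a| < e /\ `|b| < e.
Proof.
rewrite normc_def ltcR /= => h.
have ha : `|a| <= Num.sqrt (a ^+ 2 + b ^+ 2).
  by rewrite -sqrtr_sqr ler_wsqrtr // lerDl sqr_ge0.
have hb : `|b| <= Num.sqrt (a ^+ 2 + b ^+ 2).
  by rewrite -sqrtr_sqr ler_wsqrtr // lerDr sqr_ge0.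
by split; apply: le_lt_trans h.
Qed.

Lemma normc_lt2 (a b e : R) : 0 < e -> a ^+ 2 + b ^+ 2 < e ^+ 2 ->
  `|Complex a b| < (e%:C)%C.
Proof.
move=> e0 h; rewrite normc_def ltcR /=.
by rewrite -[X in _ < X](ger0_norm (ltW e0)) -sqrtr_sqr ltr_sqrt // exprn_gt0.
Qed.

Lemma conv_lt (t x y l : R) : 0 < t < 1 -> l < x -> l < y -> l < x + t * (y - x).
Proof. by move=> /andP [t0 t1] hx hy; nra. Qed.
Lemma conv_gt (t x y l : R) : 0 < t < 1 -> x < l -> y < l -> x + t * (y - x) < l.
Proof. by move=> /andP [t0 t1] hx hy; nra. Qed.

Lemma geo (W : set (complex R)) (l1 l2 rho : R) : 0 < rho ->
  (forall a b (tr : R), W a -> W b -> 0 < tr < 1 -> W (a + (tr%:C)%C * (b - a))) ->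
  (forall u v : R, `|u| <= rho -> `|v| <= rho -> exists a b : R,
      W (Complex a b) /\ `|a - (l1 + u)| < rho / 2 /\ `|b - (l2 + v)| < rho / 2) ->
  W (Complex l1 l2).
Proof.
move=> r0 hconv happ.
have seg : forall a1 b1 a2 b2 : R, W (Complex a1 b1) -> W (Complex a2 b2) -> a2 < l1 < a1 ->
    exists b : R, [/\ W (Complex l1 b), (l2 < b1 -> l2 < b2 -> l2 < b) &
                                     (b1 < l2 -> b2 < l2 -> b < l2)].
  move=> a1 b1 a2 b2 W1 W2 /andP [h2 h1].
  have an0 : a1 - a2 != 0 by rewrite subr_eq0 gt_eqF // (lt_trans h2 h1).
  set t := (l1 - a2) / (a1 - a2).
  have ht : 0 < t < 1.
    apply/andP; split; first by rewrite divr_gt0 // subr_gt0 // (lt_trans h2 h1).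
    by rewrite ltr_pdivrMr ?subr_gt0 ?(lt_trans h2 h1) // mul1r ltrD2r.
  have := hconv _ _ t W2 W1 ht.
  have -> : Complex a2 b2 + (t%:C)%C * (Complex a1 b1 - Complex a2 b2) =
            Complex l1 (b2 + t * (b1 - b2)).
    by simpc; rewrite /t divfK // addrC subrK.
  move=> Wb; exists (b2 + t * (b1 - b2)); split => //.
    by move=> hb1 hb2; apply: conv_lt.
  by move=> hb1 hb2; apply: conv_gt.
have rr : `|rho| <= rho by rewrite ger0_norm // ltW.
have rn : `|- rho| <= rho by rewrite normrN.
have [x1 [y1 [W1 [hx1 hy1]]]] := happ _ _ rr rr.
have [x2 [y2 [W2 [hx2 hy2]]]] := happ _ _ rn rr.
have [x3 [y3 [W3 [hx3 hy3]]]] := happ _ _ rr rn.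
have [x4 [y4 [W4 [hx4 hy4]]]] := happ _ _ rn rn.
move: hx1 hy1 hx2 hy2 hx3 hy3 hx4 hy4; rewrite !ltr_norml.
move=> /andP [? ?] /andP [? ?] /andP [? ?] /andP [? ?] /andP [? ?] /andP [? ?] /andP [? ?] /andP [? ?].
have [bU [WU hU _]] := seg _ _ _ _ W1 W2 (ltac:(apply/andP; split; lra)).
have [bL [WL _ hL]] := seg _ _ _ _ W3 W4 (ltac:(apply/andP; split; lra)).
have lU : l2 < bU by apply: hU; lra.
have lL : bL < l2 by apply: hL; lra.
have bn0 : bU - bL != 0 by rewrite subr_eq0 gt_eqF // (lt_trans lL lU).
set t := (l2 - bL) / (bU - bL).
have ht : 0 < t < 1.
  apply/andP; split; first by rewrite divr_gt0 // subr_gt0 // (lt_trans lL lU).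
  by rewrite ltr_pdivrMr ?subr_gt0 ?(lt_trans lL lU) // mul1r ltrD2r.
have := hconv _ _ t WL WU ht.
have -> : Complex l1 bL + (t%:C)%C * (Complex l1 bU - Complex l1 bL) = Complex l1 l2.
  by simpc; rewrite /t divfK // addrC subrK.
done.
Qed.
End CX.
Section IP.
Variables (R : realType) (H : lmodType (complex R)) (ip : H -> H -> complex R).
Local Notation fsp := (@fspan R H).
Hypothesis ipDl : forall (a : complex R) (x y z : H),
           ip (a *: x + y) z = a * ip x z + ip y z.
Hypothesis ip_conj : forall x y : H, ip y x = (ip x y)^*.
Hypothesis ip_eq0 : forall x : H, ip x x = 0 -> x = 0.

Lemma ip0l z : ip 0 z = 0.
Proof.
have h := ipDl 1 0 0 z; rewrite scaler0 addr0 mul1r in h.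
by apply: (addrI (ip 0 z)); rewrite addr0 -h.
Qed.
Lemma ipDl1 x y z : ip (x + y) z = ip x z + ip y z.
Proof. by rewrite -[x]scale1r ipDl mul1r scale1r. Qed.
Lemma ipZl a x z : ip (a *: x) z = a * ip x z.
Proof. by rewrite -[a *: x]addr0 ipDl ip0l addr0. Qed.
Lemma ipNl x z : ip (- x) z = - ip x z.
Proof. by rewrite -scaleN1r ipZl mulN1r. Qed.
Lemma ipBl x y z : ip (x - y) z = ip x z - ip y z.
Proof. by rewrite ipDl1 ipNl. Qed.
Lemma ip0r z : ip z 0 = 0.
Proof. by rewrite [LHS]ip_conj ip0l conjC0. Qed.
Lemma ipDr z x y : ip z (x + y) = ip z x + ip z y.
Proof. by rewrite [LHS]ip_conj ipDl1 rmorphD (ip_conj x z) (ip_conj y z). Qed.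
Lemma ipZr z a x : ip z (a *: x) = a^* * ip z x.
Proof. by rewrite [LHS]ip_conj ipZl rmorphM (ip_conj x z). Qed.
Lemma ipNr z x : ip z (- x) = - ip z x.
Proof. by rewrite [LHS]ip_conj ipNl rmorphN (ip_conj x z). Qed.
Lemma ipBr z x y : ip z (x - y) = ip z x - ip z y.
Proof. by rewrite ipDr ipNr. Qed.

Lemma hnorm1 x : @hnorm R H ip x = 1 <-> ip x x = 1.
Proof.
rewrite /hnorm; split => [h|->]; last exact: sqrtC1.
by rewrite -[ip x x]sqrtCK h expr1n.
Qed.

Definition subsp (W : set H) := W 0 /\ forall a u v, W u -> W v -> W (a *: u + v).
Lemma subspZ W a u : subsp W -> W u -> W (a *: u).
Proof. by case=> W0 Wl Wu; rewrite -[_ *: _]addr0; apply: Wl. Qed.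
Lemma subspD W u v : subsp W -> W u -> W v -> W (u + v).
Proof. by case=> W0 Wl Wu Wv; rewrite -[u]scale1r; apply: Wl. Qed.
Lemma subspN W u : subsp W -> W u -> W (- u).
Proof. by move=> sW Wu; rewrite -scaleN1r; apply: subspZ. Qed.
Lemma subspB W u v : subsp W -> W u -> W v -> W (u - v).
Proof. by move=> sW Wu Wv; apply: subspD => //; apply: subspN. Qed.

Lemma fspan_subsp s : subsp (fsp s).
Proof.
split; first by exists (fun _ => 0); rewrite big1 // => i _; rewrite scale0r.
move=> a u v [cu ->] [cv ->]; exists (fun i => a * cu i + cv i).
rewrite scaler_sumr -big_split /=; apply: eq_bigr => i _.
by rewrite scalerDl scalerA.
Qed.

Lemma fspan_nth s (i : 'I_(size s)) : fsp s (nth 0 s i).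
Proof.
exists (fun j => (j == i)%:R); rewrite (bigD1 i) //= eqxx scale1r big1 ?addr0 //.
by move=> j /negbTE ->; rewrite scale0r.
Qed.

Lemma fspan_cons a s u :
  fsp (a :: s) u <-> exists k w, fsp s w /\ u = k *: a + w.
Proof.
split.
  case=> c ->; exists (c ord0), (\sum_(i < size s) c (lift ord0 i) *: nth 0 s i).
  by split; [eexists | rewrite big_ord_recl].
case=> k [w [[c ->] ->]].
exists (fun i : 'I_(size s).+1 => if unlift ord0 i is Some j then c j else k).
rewrite big_ord_recl /= unlift_none; congr (_ + _); apply: eq_bigr => i _.
by rewrite liftK.
Qed.

Lemma orth_sum z n (c : 'I_n -> complex R) (g : 'I_n -> H) :
  (forall i, ip z (g i) = 0) -> ip z (\sum_(i < n) c i *: g i) = 0.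
Proof.
move=> hg; apply: (big_ind (fun u => ip z u = 0)); first exact: ip0r.
  by move=> u v hu hv; rewrite ipDr hu hv addr0.
by move=> i _; rewrite ipZr hg mulr0.
Qed.

Lemma orth_fsp z s : (forall i : 'I_(size s), ip z (nth 0 s i) = 0) ->
  forall u, fsp s u -> ip z u = 0.
Proof. by move=> h u [c ->]; apply: orth_sum. Qed.

Definition isproj (W : set H) y w := W w /\ forall u, W u -> ip (y - w) u = 0.

Lemma proj_uniq W y w1 w2 : subsp W -> isproj W y w1 -> isproj W y w2 -> w1 = w2.
Proof.
move=> sW [W1 h1] [W2 h2]; have Wd : W (w1 - w2) by apply: subspB.
have := h1 _ Wd; have := h2 _ Wd => e2 e1.
have ed : w1 - w2 = (y - w2) - (y - w1) by rewrite opprB [RHS]addrC addrA subrK.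
have : ip (w1 - w2) (w1 - w2) = 0 by rewrite {1}ed ipBl e1 e2 subrr.
by move/ip_eq0/eqP; rewrite subr_eq0 => /eqP.
Qed.

Lemma proj_eq W y w : subsp W -> isproj W y w -> Defs.proj ip W y = w.
Proof.
move=> sW pw; rewrite /proj; apply: xget_unique => //.
move=> w1 pw1. have pw2 : isproj W y w1 by exact: pw1. exact: (proj_uniq sW pw2 pw).
Qed.

Lemma proj_ex s y : exists w, isproj (fsp s) y w.
Proof.
elim: s y => [|a s IH] y.
  exists 0; split; first by exists (fun _ => 0); rewrite big_ord0.
  by move=> u [c ->]; rewrite big_ord0 ip0r.
have [pa [Spa hpa]] := IH a; have [py [Spy hpy]] := IH y.
have sS := fspan_subsp s.
set a' := a - pa.
have a'orth : forall u, fsp s u -> ip a' u = 0 by [].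
have [e0|ne0] := eqVneq (ip a' a') 0.
  have ea : a = pa by apply/eqP; rewrite -subr_eq0; apply/eqP/ip_eq0.
  exists py; split; first by apply/fspan_cons; exists 0, py; rewrite scale0r add0r.
  move=> u /fspan_cons [k [w [Sw ->]]].
  by rewrite ipDr ipZr ea !hpy // mulr0 addr0.
set kap := ip (y - py) a' / ip a' a'.
exists (kap *: a + (py - kap *: pa)); split.
  by apply/fspan_cons; exists kap, (py - kap *: pa); split => //; apply: subspB => //; apply: subspZ.
have ey : y - (kap *: a + (py - kap *: pa)) = (y - py) - kap *: a'.
  rewrite /a' scalerBr opprD opprB !addrA [in RHS]opprB [RHS]addrA [LHS]addrAC [RHS]addrAC; congr (_ + _); exact: addrAC.
move=> u /fspan_cons [k [w [Sw ->]]].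
have ea' : a = a' + pa by rewrite /a' subrK.
clearbody a'.
have key : ip (y - py) a - kap * ip a' a = 0.
  rewrite ea' !ipDr (hpy _ Spa) (a'orth _ Spa) !addr0.
  by rewrite /kap (divfK ne0) subrr.
rewrite ey ipDr ipZr ipBl ipZl key mulr0 add0r.
by rewrite ipBl ipZl (hpy _ Sw) (a'orth _ Sw) mulr0 subr0.
Qed.

Lemma proj_spec s y : isproj (fsp s) y (Defs.proj ip (fsp s) y).
Proof.
have [w pw] := proj_ex s y; rewrite (proj_eq (fspan_subsp s) pw) //.
Qed.


Lemma decomp_uniq (V : set H) x v1 v2 c1 c2 : ip x x = 1 ->
  (forall v, V v -> ip v x = 0) -> V v1 -> V v2 ->
  v1 + c1 *: x = v2 + c2 *: x -> v1 = v2 /\ c1 = c2.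
Proof.
move=> hx hv V1 V2 e.
have ec : c1 = c2.
  have := congr1 (ip ^~ x) e => /=.
  by rewrite !ipDl1 !ipZl (hv _ V1) (hv _ V2) hx !add0r !mulr1.
by split => //; move: e; rewrite ec => /addIr.
Qed.

Lemma addline_mem (V : set H) x v c : V v -> addline V x (v + c *: x).
Proof. by move=> Vv; exists v, c. Qed.

Lemma spec_block (V : set H) x (SV S : H -> H) Ax mu :
  subsp V -> ip x x = 1 -> (forall v, V v -> ip v x = 0) ->
  (forall v, V v -> V (SV v)) -> V Ax ->
  (forall v c, V v -> S (v + c *: x) = SV v + c *: Ax + (c * mu) *: x) ->
  spectrum (addline V x) S = spectrum V SV `|` [set mu].
Proof.
move=> sV hx hv SVV VA hS.
have dec : forall z v c, V v -> S (v + c *: x) - z *: (v + c *: x) =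
    (SV v - z *: v + c *: Ax) + (c * (mu - z)) *: x.
  move=> z v c Vv; rewrite hS // scalerDr scalerA mulrBr scalerBl (mulrC z c).
  rewrite opprD !addrA; congr (_ + _); rewrite -!addrA; congr (_ + _).
  by rewrite [RHS]addrC -addrA.
have VD : forall z v c, V v -> V (SV v - z *: v + c *: Ax).
  move=> z v c Vv; apply: subspD => //; last exact: subspZ.
  by apply: subspB => //; [exact: SVV | exact: subspZ].
have muspec : spectrum (addline V x) S mu.
  move=> hVx.
  have Vxx : addline V x x.
    by rewrite -[x in addline _ _ x]add0r -[x in addline _ _ (_ + x)]scale1r; apply: addline_mem; case: sV.
  have [w [[[v [c [Vv ->]]] ew] _]] := hVx x Vxx.
  rewrite dec // subrr mulr0 scale0r addr0 in ew.
  have := hv _ (VD mu v c Vv); rewrite ew hx => /eqP; by rewrite oner_eq0.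
apply/seteqP; split => z.
  move=> hz; have [->|zmu] := eqVneq z mu; first by right.
  left => hV; apply: hz => y [yv [d [Vyv ->]]].
  have zmu' : mu - z != 0 by rewrite subr_eq0 eq_sym.
  set c := d / (mu - z).
  have Vr : V (yv - c *: Ax) by apply: subspB => //; apply: subspZ.
  have [v [[Vv ev] uv]] := hV _ Vr.
  exists (v + c *: x); split.
    split; first exact: addline_mem.
    by rewrite dec // ev subrK /c divfK.
  move=> w' [[v' [c' [Vv' ->]]] e'].
  rewrite dec // in e'.
  have [e1 e2] := decomp_uniq hx hv (VD z v' c' Vv') Vyv e'.
  have ec : c' = c by rewrite /c -e2 mulfK.
  rewrite ec in e1.
  have ev' : SV v' - z *: v' = yv - c *: Ax by rewrite -e1 addrK.
  by rewrite (uv v') ?ec.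
case => [hz|->]; last exact: muspec.
have [->|zmu] := eqVneq z mu; first exact: muspec.
move=> hVx; apply: hz => y Vy.
have Vxy : addline V x y by rewrite -[y]addr0 -(scale0r x); exact: addline_mem.
have [w [[[v [c [Vv ->]]] ew] uw]] := hVx y Vxy.
rewrite dec // -[y in RHS]addr0 -(scale0r x) in ew.
have [e1 e2] := decomp_uniq hx hv (VD z v c Vv) Vy ew.
have zmu' : mu - z != 0 by rewrite subr_eq0 eq_sym.
have c0 : c = 0 by move/eqP: e2; rewrite mulf_eq0 (negbTE zmu') orbF => /eqP.
rewrite c0 scale0r addr0 in e1.
exists v; split; first by [].
move=> v' [Vv' e'].
have e'' : S (v' + 0 *: x) - z *: (v' + 0 *: x) = y.
  by rewrite dec // !scale0r mul0r scale0r !addr0.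
by have := uw _ (conj (addline_mem x 0 Vv') e''); rewrite c0 !scale0r !addr0.
Qed.

Lemma addline_subsp (V : set H) x : subsp V -> subsp (addline V x).
Proof.
move=> sV; split.
  have -> : (0 : H) = 0 + 0 *: x by rewrite scale0r addr0.
  by apply: addline_mem; case: sV.
move=> a _ _ [v1 [c1 [V1 ->]]] [v2 [c2 [V2 ->]]].
have -> : a *: (v1 + c1 *: x) + (v2 + c2 *: x) = (a *: v1 + v2) + (a * c1 + c2) *: x.
  rewrite scalerDr scalerDl scalerA -!addrA; congr (_ + _).
  by rewrite addrCA.
by apply: addline_mem; case: sV => _; apply.
Qed.

Lemma PV_lin s a y1 y2 : Defs.proj ip (fsp s) (a *: y1 + y2) =
  a *: Defs.proj ip (fsp s) y1 + Defs.proj ip (fsp s) y2.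
Proof.
have sS := fspan_subsp s.
have [P1 o1] := proj_spec s y1; have [P2 o2] := proj_spec s y2.
apply: proj_eq => //; split; first by case: sS => _; apply.
move=> u Su; rewrite opprD addrACA -scalerBr ipDl1 ipZl o1 // o2 //.
by rewrite mulr0 addr0.
Qed.

Lemma proj_line s x y : ip x x = 1 -> (forall v, fsp s v -> ip x v = 0) ->
  Defs.proj ip (addline (fsp s) x) y = Defs.proj ip (fsp s) y + ip y x *: x.
Proof.
move=> hx xV; have sS := fspan_subsp s.
have [P1 o1] := proj_spec s y.
apply: proj_eq; first exact: addline_subsp.
split; first exact: addline_mem.
move=> _ [v [c [Vv ->]]].
rewrite opprD addrA ipBl ipZl !ipDr !ipZr o1 // xV // hx.
have -> : ip (y - Defs.proj ip (fsp s) y) x = ip y x.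
  by rewrite ipBl [ip (Defs.proj _ _ _) x]ip_conj xV // conjC0 subr0.
by rewrite !add0r mulr1 mulrC subrr.
Qed.

Variables (dom : set H) (T : H -> H).
Hypothesis hT : linop dom T.

Lemma dom0 : dom 0. Proof. by case: hT. Qed.
Lemma domZD a x y : dom x -> dom y -> dom (a *: x + y).
Proof. by case: hT => _ h dx dy; case: (h a x y dx dy). Qed.
Lemma TZD a x y : dom x -> dom y -> T (a *: x + y) = a *: T x + T y.
Proof. by case: hT => _ h dx dy; case: (h a x y dx dy). Qed.
Lemma T0 : T 0 = 0.
Proof.
have e := TZD 1 dom0 dom0; rewrite scaler0 addr0 scale1r in e.
by apply: (addrI (T 0)); rewrite addr0 -e.
Qed.
Lemma domZ a x : dom x -> dom (a *: x).
Proof. by move=> dx; rewrite -[_ *: _]addr0; apply: domZD => //; apply: dom0. Qed.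
Lemma domD x y : dom x -> dom y -> dom (x + y).
Proof. by move=> dx dy; rewrite -[x]scale1r; apply: domZD. Qed.
Lemma TZ a x : dom x -> T (a *: x) = a *: T x.
Proof. by move=> dx; rewrite -[_ *: _]addr0 TZD ?T0 ?addr0 //; apply: dom0. Qed.
Lemma TD x y : dom x -> dom y -> T (x + y) = T x + T y.
Proof. by move=> dx dy; rewrite -[x]scale1r TZD // !scale1r. Qed.

Lemma T_sum n (c : 'I_n -> complex R) (g : 'I_n -> H) : (forall i, dom (g i)) ->
  dom (\sum_(i < n) c i *: g i) /\ T (\sum_(i < n) c i *: g i) = \sum_(i < n) c i *: T (g i).
Proof.
move=> hg; apply: (big_rec2 (fun u v => dom u /\ T u = v)).
  by split; [apply: dom0 | apply: T0].
move=> i u v _ [du <-]; split; [exact: domZD | exact: TZD].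
Qed.

Lemma good_choice s x lam eps :
  (forall i : 'I_(size s), dom (nth 0 s i)) -> dom x -> ip x x = 1 ->
  (forall i : 'I_(size s), ip x (nth 0 s i) = 0) ->
  (forall i : 'I_(size s), ip x (T (nth 0 s i)) = 0) ->
  `|ip (T x) x - lam| < eps ->
  lemma6p6_choice ip dom T (fsp s) lam eps x (ip (T x) x)
     (fun h => ip h x *: Defs.proj ip (fsp s) (T x)).
Proof.
move=> hs dx hx hxs hxTs hmu.
set V := fsp s; set mu := ip (T x) x; set PV := Defs.proj ip V.
have sV : subsp V := fspan_subsp s.
have xV : forall v, V v -> ip x v = 0 := orth_fsp hxs.
have vx : forall v, V v -> ip v x = 0 by move=> v Vv; rewrite ip_conj xV // conjC0.
have domV : forall v, V v -> dom v by move=> v [c ->]; case: (T_sum c hs).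
have Tvx : forall v, V v -> ip (T v) x = 0.
  move=> v [c ->]; have [_ ->] := T_sum c hs.
  by rewrite ip_conj orth_sum // conjC0.
have blk : forall v c, V v -> compress ip (addline V x) T (v + c *: x) =
    compress ip V T v + c *: PV (T x) + (c * mu) *: x.
  move=> v c Vv; have dv := domV v Vv; rewrite /compress proj_line // TD ?TZ //; last exact: domZ.
  rewrite [T v + _]addrC PV_lin ipDl1 ipZl (Tvx v Vv) addr0.
  by rewrite (addrC (c *: _)).
rewrite /lemma6p6_choice; split.
- by split.
- by apply/hnorm1.
- by [].
- rewrite /block_form; split; first by move=> c; rewrite ipZl hx mulr1 scalerA mulr1.
  split; first by rewrite hx scale1r; case: (proj_spec s (T x)).
  by move=> v c Vv; rewrite blk // ipZl hx mulr1.
- apply: (spec_block (Ax := PV (T x))) => //.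
  + by move=> v Vv; case: (proj_spec s (T v)).
  + by case: (proj_spec s (T x)).
Qed.

Hypothesis ip_ge0 : forall x : H, 0 <= ip x x.

Lemma TH (M : set H) a0 b0 (tr : R) : subsp M -> (forall x, M x -> dom x) ->
  numrange ip M T a0 -> numrange ip M T b0 -> 0 < tr < 1 ->
  numrange ip M T (a0 + (tr%:C)%C * (b0 - a0)).
Proof.
move=> sM Md [x [Mx nx] <-] [y [My ny] <-] ht; clear a0 b0.
move/hnorm1: nx => hx; move/hnorm1: ny => hy.
have dx := Md x Mx; have dy := Md y My.
have [eab|nab] := eqVneq (ip (T y) y) (ip (T x) x).
  by rewrite eab subrr mulr0 addr0 /numrange; exists x => //; split => //; apply/hnorm1.
set a := ip (T x) x in nab *; set b := ip (T y) y in nab *.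
set d := b - a; have dn0 : d != 0 by rewrite subr_eq0.
set c := a + (tr%:C)%C * d.
set bet := (ip (T x) y - c * ip x y) / d.
set gam := (ip (T y) x - c * ip y x) / d.
have [w [k [wn0 [kr ek]]]] := omega_choice bet gam.
set m := w * w^*.
have mr : m^* = m by rewrite /m rmorphM /= conjCK mulrC.
have m0 : 0 <= m by rewrite /m -normCK exprn_ge0.
have mn0 : m != 0 by rewrite /m mulf_eq0 negb_or wn0 conjC_eq0 wn0.
have [s [sr es]] := quad_root kr mr m0 mn0 ht.
set al := s * w.
have ealc : al^* = s * w^* by rewrite /al rmorphM /= sr.
set z := al *: x + y.
have dz : dom z by apply: domZD.
have ezz : ip z z = al * (al^* * 1 + ip x y) + (al^* * ip y x + 1).
  by rewrite /z !ipDl !ipDr !ipZr hx hy.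
have eTz : ip (T z) z = al * (al^* * a + ip (T x) y) + (al^* * ip (T y) x + b).
  by rewrite /z TZD // !ipDl !ipDr !ipZr.
have eP1 : ip (T x) y = bet * d + c * ip x y by rewrite /bet divfK // subrK.
have eP2 : ip (T y) x = gam * d + c * ip y x by rewrite /gam divfK // subrK.
have Qz : ip (T z) z = c * ip z z.
  apply/eqP; rewrite -subr_eq0; apply/eqP.
  transitivity (d * ((1 - (tr%:C)%C) + k * s - (tr%:C)%C * m * (s * s))); last by rewrite es mulr0.
  rewrite eTz ezz -ek /m ealc eP1 eP2 /c /d /al; ring.
have zn0 : z != 0.
  apply/negP => /eqP z0.
  have ey : y = (- al) *: x by apply/eqP; rewrite scaleNr -addr_eq0 addrC; apply/eqP; exact: z0.
  have hyy := hy; rewrite ey ipZl ipZr hx mulr1 in hyy.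
  move: nab; rewrite /b ey TZ // ipZl ipZr mulrA hyy mul1r -/a.
  by rewrite eqxx.
have zz0 : 0 < ip z z.
  rewrite lt_def ip_ge0 andbT; apply/negP => /eqP h.
  by move: zn0; rewrite (ip_eq0 h) eqxx.
set n := sqrtC (ip z z).
have n0 : 0 < n by rewrite sqrtC_gt0.
have nn0 : n != 0 by rewrite gt_eqF.
have nr : n^* = n by apply: geC0_conj; apply: ltW.
have nn : n * n = ip z z by rewrite -expr2 sqrtCK.
have nir : (n^-1)^* = n^-1 by rewrite fmorphV /= nr.
rewrite /numrange; exists (n^-1 *: z).
  split; first by apply: subspZ => //; apply: subspD => //; apply: subspZ.
  apply/hnorm1; rewrite ipZl ipZr nir -nn; field => //.
rewrite TZ // ipZl ipZr nir Qz -nn -/c; field => //.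
Qed.

Lemma orth_subsp (U : set H) : subsp (orth ip U).
Proof.
split; first by move=> v _; rewrite ip0l.
by move=> a u v hu hv g Ug; rewrite ipDl hu // hv // mulr0 addr0.
Qed.

Lemma M_subsp l : subsp (orth ip (fsp l) `&` dom).
Proof.
have [hO0 hOl] := orth_subsp (fsp l).
split; first by split => //; apply: dom0.
by move=> a u v [hou du] [hov dv]; split; [apply: hOl | apply: domZD].
Qed.

Lemma choose_x (l : seq H) lam eps : We1 ip dom T lam -> 0 < eps ->
  exists x, [/\ dom x, ip x x = 1,
    (forall j, (j < size l)%N -> ip x (nth 0 l j) = 0) & `|ip (T x) x - lam| < eps].
Proof.
move=> hl e0.
have hc : closure (numrange ip (orth ip (fsp l) `&` dom) T : set (complex R)^o) lam.
  by apply: hl; exists l.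
have [q [[x [[ox dx] nx] <-] hb]] := hc _ (nbhsx_ballx (lam : (complex R)^o) eps e0).
exists x; split => //; first exact/hnorm1.
  by move=> j hj; exact: (ox _ (fspan_nth (Ordinal hj))).
by rewrite distrC.
Qed.

Lemma choose_x_int (l : seq H) lam : (We1 ip dom T : set (complex R)^o)^° lam ->
  exists x, [/\ dom x, ip x x = 1,
    (forall j, (j < size l)%N -> ip x (nth 0 l j) = 0) & ip (T x) x = lam].
Proof.
move=> /nbhs_ballP [r r0 hr].
set M := orth ip (fsp l) `&` dom.
have sM : subsp M := M_subsp l.
have Md : forall x, M x -> dom x by move=> x [].
suff [x [[ox dx] nx] ex] : numrange ip M T lam.
  exists x; split => //; first exact/hnorm1.
  by move=> j hj; exact: (ox _ (fspan_nth (Ordinal hj))).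
have hW : forall p, ball (lam : (complex R)^o) r p ->
    closure (numrange ip M T : set (complex R)^o) p.
  by move=> p /hr hp; apply: hp; exists l.
move: r0 hr hW; case: r => r1 r2 r0 _ hW.
move: r0; rewrite /= ltcE /= => /andP [/eqP r20 r10]; subst r2.
move: hW; case: lam => l1 l2 hW.
apply: (@geo _ _ _ _ (r1 / 4)); first by lra.
  by move=> a b tr Wa Wb ht; apply: TH.
move=> u v hu hv.
have bp : ball ((Complex l1 l2 : complex R) : (complex R)^o) (Complex r1 0) (Complex (l1 + u) (l2 + v)).
  rewrite /ball /=.
  have -> : (Complex l1 l2 - Complex (l1 + u) (l2 + v) : complex R) = Complex (- u) (- v) by simpc; congr Complex; ring.
  apply: normc_lt2; first by [].
  move: hu hv; rewrite !ler_norml => /andP [? ?] /andP [? ?]; nra.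
have rh : 0 < (r1 / 4 / 2 : R) by lra.
have [q [Wq hq]] := hW _ bp _ (nbhsx_ballx (Complex (l1 + u) (l2 + v) : (complex R)^o) ((r1 / 4 / 2)%:C)%C (ltac:(by rewrite ltcR))).
move: Wq hq; case: q => a b Wq; rewrite /ball /= => hq.
exists a, b; split => //.
have : (Complex (l1 + u) (l2 + v) - Complex a b : complex R) = Complex (l1 + u - a) (l2 + v - b) by simpc.
move=> e; rewrite e in hq; have [h1 h2] := normc_lt hq.
by split; rewrite distrC.
Qed.
End IP.

Unset Implicit Arguments.

Theorem lemma6p6 (R : realType) (H : lmodType (complex R))
  (ip : H -> H -> complex R) (hH : sep_inf_Hilbert ip)
  (dom : set H) (T : H -> H) (hT : linop dom T)
  (V : set H) (hV : findim_subspace V) (hVdom : V `<=` dom)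
  (lam eps : complex R) (hlam : We1 ip dom T lam) (heps : 0 < eps) :
  [/\ exists (x : H) (mu : complex R) (A : H -> H),
        lemma6p6_choice ip dom T V lam eps x mu A,
      (dense_dom ip dom /\ dom `<=` adj_dom ip dom T ->
        exists (x : H) (mu : complex R),
          lemma6p6_choice ip dom T V lam eps x mu (fun _ => 0)) &
      ((We1 ip dom T : set (complex R)^o)^° lam ->
        exists (x : H) (A : H -> H),
          lemma6p6_choice ip dom T V lam eps x lam A)].
Proof.
case: hH => ipDl ip_conj ip_ge0 ip_eq0 _ _ _.
case: hV => s Vs; subst V.
have hs : forall i : 'I_(size s), dom (nth 0 s i) by move=> i; apply: hVdom; apply: fspan_nth.
set l1 := s ++ map T s.
have get1 : forall x, (forall j, (j < size l1)%N -> ip x (nth 0 l1 j) = 0) ->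
    (forall i : 'I_(size s), ip x (nth 0 s i) = 0) /\
    (forall i : 'I_(size s), ip x (T (nth 0 s i)) = 0).
  move=> x hxl; split => i.
    have := hxl i; rewrite /l1 size_cat nth_cat ltn_ord ltn_addr //; exact.
  have := hxl (size s + i)%N; rewrite /l1 size_cat nth_cat.
  rewrite (_ : (size s + i < size s)%N = false) /=; last by rewrite ltnNge leq_addr.
  rewrite addKn.
  by rewrite (nth_map 0) // size_map ltn_add2l; exact.
split.
- have [x [dx hx hxl hmu]] := choose_x (ip:=ip) (dom:=dom) (T:=T) l1 hlam heps.
  have [hxs hxTs] := get1 x hxl.
  exists x, (ip (T x) x), (fun h => ip h x *: Defs.proj ip (fspan s) (T x)).
  exact: good_choice.
- case=> _ hadj.
  set zf := fun g => xget 0 [set z | forall u, dom u -> ip (T u) g = ip u z].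
  have hz : forall i : 'I_(size s), forall u, dom u -> ip (T u) (nth 0 s i) = ip u (zf (nth 0 s i)).
    move=> i; rewrite /zf; apply: (xgetPex 0 (P := [set z | forall u, dom u -> ip (T u) (nth 0 s i) = ip u z])).
    exact: hadj (hs i).
  set l2 := l1 ++ map zf s.
  have [x [dx hx hxl hmu]] := choose_x (ip:=ip) (dom:=dom) (T:=T) l2 hlam heps.
  have [hxs hxTs] : (forall i : 'I_(size s), ip x (nth 0 s i) = 0) /\
    (forall i : 'I_(size s), ip x (T (nth 0 s i)) = 0).
    apply: get1 => j hj; have := hxl j; rewrite /l2 size_cat nth_cat hj ltn_addr //; exact.
  have hxz : forall i : 'I_(size s), ip x (zf (nth 0 s i)) = 0.
    move=> i; have := hxl (size l1 + i)%N.
    rewrite /l2 nth_cat.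
    rewrite (_ : (size l1 + i < size l1)%N = false) /=; last by rewrite ltnNge leq_addr.
    rewrite addKn size_cat.
    rewrite (nth_map 0) //; apply; rewrite /l1 !size_cat !size_map; have := ltn_ord i; lia.
  have P0 : Defs.proj ip (fspan s) (T x) = 0.
    apply: proj_eq => //; first exact: fspan_subsp.
    split; first by case: (fspan_subsp s).
    move=> u [c ->]; rewrite subr0; apply: orth_sum => // i.
    by rewrite hz // hxz.
  exists x, (ip (T x) x).
  have := good_choice ipDl ip_conj ip_eq0 hT hs dx hx hxs hxTs hmu.
  rewrite P0.
  have -> : (fun h => ip h x *: (0 : H)) = (fun _ => 0) by apply: funext => h; rewrite scaler0.
  done.
- move=> hint.
  have [x [dx hx hxl ex]] : exists x, [/\ dom x, ip x x = 1,
      (forall j, (j < size l1)%N -> ip x (nth 0 l1 j) = 0) & ip (T x) x = lam].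
    by apply: choose_x_int.
  have [hxs hxTs] := get1 x hxl.
  exists x, (fun h => ip h x *: Defs.proj ip (fspan s) (T x)).
  rewrite -ex; apply: good_choice => //.
  by rewrite subrr normr0.
Qed.
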